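(* For any distribution $\mu$ over $\{0,1\}^V$, any $\theta\in(0,1)$ and any $\epsilon\in(0,1)$, if $T_1\ge T^{\mathrm{FD}}_{\mathrm{mix}}(\mu,\theta,\frac\epsilon2)$ and $T_2\ge T^{\mathrm{tilted}}_{\mathrm{mix}}(\mu,\theta,\frac{\epsilon}{2T_1})$, then the output $X=\mathsf{contr}(X^{(T_1T_2)}_{\mathrm{alg}})$ of the algorithm $\mathcal A_\mu(\theta,T_1,T_2)$ satisfies $d_{\mathrm{TV}}(X,\mu)\le\epsilon$.
   Context: Tilted distribution $(\theta*\mu)(\sigma)\propto\mu(\sigma)\theta^{\|\sigma\|_1}$; for $\Lambda\subseteq V$, $(\theta*\mu)^{\mathbf 1_{\Lambda}}$ is it conditioned on all coordinates in $\Lambda$ being 1; $\mu_\Lambda$ is the marginal on $\Lambda$. Glauber dynamics $P$ on $\nu$: pick $v$ uniformly, resample $X_v\sim\nu_v^{X_{V\setminus\{v\}}}$; $T^{\mathrm{GD}}_{\mathrm{mix}}(\nu,\epsilon)=\max_{X:\nu(X)>0}\min\{t:d_{\mathrm{TV}}(P^t(X,\cdot),\nu)\le\epsilon\}$; $T^{\mathrm{tilted}}_{\mathrm{mix}}(\mu,\theta,\epsilon)=\max\{T^{\mathrm{GD}}_{\mathrm{mix}}((\theta*\mu)^{\mathbf 1_\Lambda},\epsilon):\mu_\Lambda(\mathbf 1_\Lambda)>0\}$. Field dynamics $P_{\theta,\mu}$: from $X$, build random $S\subseteq V$ including each $v$ independently with probability $\theta$ if $X_v=1$, $1$ if $X_v=0$;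 resample $X\sim(\theta*\mu)^{\mathbf 1_{V\setminus S}}$. $T^{\mathrm{FD}}_{\mathrm{mix}}(\mu,\theta,\epsilon)=\max_{X\in\mathrm{supp}\,\mu}\min\{t:d_{\mathrm{TV}}(P^t_{\theta,\mu}(X,\cdot),\mu)\le\epsilon\}$. $\mathsf{lift}:\{0,1\}^V\to\{0,1,\star\}^V$ is random: independently per coordinate, $0\mapsto0$, and $1\mapsto\star$ with probability $1-\theta$, $1\mapsto1$ with probability $\theta$. $\mathsf{contr}:\{0,1,\star\}^V\to\{0,1\}^V$ maps $0\mapsto0$ and $1,\star\mapsto1$ coordinatewise. Algorithm $\mathcal A_\mu(\theta,T_1,T_2)$: set $X=\mathsf{lift}(\mathbf 1_V)$; repeat $T_1$ times: (a) $X\gets\mathsf{contr}(X)$; (b) $X\gets\mathsf{lift}(X)$, $S=\{v:X_v\ne\star\}$; (c) repeat $T_2$ times: pick $v\in V$ uniformly; if $v\in S$ resample $X_v\sim(\theta*\mu)_v^{\sigma_{V\setminus\{v\}}}$ with $\sigma=\mathsf{contr}(X)$, otherwise keep $X_v=\star$. $X^{(0)}_{\mathrm{alg}}=\mathsf{lift}(\mathbf 1_V)$ is the initial state and $X^{(t)}_{\mathrm{alg}}$ is the state after the $t$-th single-site step in (c); the output is $\mathsf{contr}(X^{(T_1T_2)}_{\mathrm{alg}})$.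
   Formalization: The distribution μ is further assumed to satisfy $\mu(\mathbf 1_V)>0$, so the all-ones configuration $\mathbf 1_V$ lies in the support of μ. The statement above fails without it. *)

(* Defs.v *)
From HB Require Import structures.
From mathcomp Require Import all_boot all_order all_algebra.
Set Implicit Arguments. Unset Strict Implicit. Unset Printing Implicit Defensive.
Import Order.TTheory GRing.Theory Num.Theory.
Local Open Scope ring_scope.

Definition is_distr (R : realFieldType) (T : finType) (p : T -> R) : Prop :=
  (forall x, 0 <= p x) /\ \sum_x p x = 1.

Definition dTV (R : realFieldType) (T : finType) (p q : T -> R) : R :=
  2^-1 * \sum_x `|p x - q x|.

Definition dirac (R : realFieldType) (T : finType) (x : T) : T -> R :=
  fun y => (x == y)%:R.

Definition push (R : realFieldType) (T U : finType) (p : T -> R) (K : T -> U -> R)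
  : U -> R := fun y => \sum_x p x * K x y.

Definition kpow (R : realFieldType) (T : finType) (K : T -> T -> R) (t : nat) (X : T)
  : T -> R := iter t (fun p => push p K) (dirac R X).

(* "T >= T_mix(nu, eps)" for the chain K with stationary nu, where
   T_mix = max_{X : nu X > 0} min {t : dTV(K^t(X,.), nu) <= eps}
   (min of the empty set being +infinity). *)
Definition mix_le (R : realFieldType) (T : finType) (K : T -> T -> R) (nu : T -> R)
  (Tm : nat) (eps : R) : Prop :=
  forall X, 0 < nu X -> exists t, (t <= Tm)%N /\ dTV (kpow K t X) nu <= eps.

Section Spins.
Variables (R : realFieldType) (V : finType).

Definition conf := {ffun V -> bool}.

Definition nones (s : conf) : nat := #|[pred v | s v]|.

Definition tilt (theta : R) (mu : conf -> R) : conf -> R :=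
  fun s => mu s * theta ^+ nones s / \sum_(t : conf) mu t * theta ^+ nones t.

Definition ones_on (L : {set V}) (s : conf) : bool := [forall v in L, s v].

Definition marg1 (mu : conf -> R) (L : {set V}) : R :=
  \sum_(t : conf | ones_on L t) mu t.

Definition cond1 (nu : conf -> R) (L : {set V}) : conf -> R :=
  fun s => if ones_on L s then nu s / marg1 nu L else 0.

Definition setv (s : conf) (v : V) (b : bool) : conf :=
  [ffun w => if w == v then b else s w].

Definition condv (nu : conf -> R) (s : conf) (v : V) (b : bool) : R :=
  nu (setv s v b) / (nu (setv s v false) + nu (setv s v true)).

Definition GD (nu : conf -> R) (X Y : conf) : R :=
  #|V|%:R^-1 * \sum_(v : V) \sum_(b : bool) condv nu X v b * (Y == setv X v b)%:R.

Definition GD_mix_le (nu : conf -> R) (Tm : nat) (eps : R) : Prop :=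
  mix_le (GD nu) nu Tm eps.

Definition tilted_mix_le (mu : conf -> R) (theta : R) (Tm : nat) (eps : R) : Prop :=
  forall L : {set V}, 0 < marg1 mu L -> GD_mix_le (cond1 (tilt theta mu) L) Tm eps.

(* field dynamics P_{theta,mu}: S contains v w.p. theta if X_v = 1, w.p. 1 if X_v = 0;
   then resample from (theta*mu)^{1_{V \ S}} *)
Definition FD (theta : R) (mu : conf -> R) (X Y : conf) : R :=
  \sum_(S : {set V})
     (\prod_(v : V) (if X v then (if v \in S then theta else 1 - theta)
                     else (if v \in S then 1 else 0)))
     * cond1 (tilt theta mu) (~: S) Y.

Definition FD_mix_le (mu : conf -> R) (theta : R) (Tm : nat) (eps : R) : Prop :=
  mix_le (FD theta mu) mu Tm eps.

(* {0,1,star}^V : Some false = 0, Some true = 1, None = star *)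
Definition xconf := {ffun V -> option bool}.

Definition lift (theta : R) (s : conf) (x : xconf) : R :=
  \prod_(v : V) match s v, x v with
                | false, Some false => 1
                | true, Some true => theta
                | true, None => 1 - theta
                | _, _ => 0
                end.

Definition contr (x : xconf) : conf := [ffun v => if x v is Some b then b else true].

Definition contrK (x : xconf) (s : conf) : R := (contr x == s)%:R.

Definition xsetv (x : xconf) (v : V) (b : bool) : xconf :=
  [ffun w => if w == v then Some b else x w].

Definition algstep (theta : R) (mu : conf -> R) (X Y : xconf) : R :=
  #|V|%:R^-1 * \sum_(v : V)
    (if X v is None then (Y == X)%:R
     else \sum_(b : bool) condv (tilt theta mu) (contr X) v b * (Y == xsetv X v b)%:R).

(* one round: (a), (b), then T2 steps of (c) *)
Definition alg_round (theta : R) (mu : conf -> R) (T2 : nat) (p : xconf -> R)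
  : xconf -> R :=
  iter T2 (fun q => push q (algstep theta mu)) (push (push p contrK) (lift theta)).

Definition alg_state (theta : R) (mu : conf -> R) (T1 T2 : nat) : xconf -> R :=
  iter T1 (alg_round theta mu T2) (push (dirac R [ffun => true]) (lift theta)).

Definition alg_out (theta : R) (mu : conf -> R) (T1 T2 : nat) : conf -> R :=
  push (alg_state theta mu T1 T2) contrK.

End Spins.

(* Main.v *)
Require Import Defs.
From HB Require Import structures.
From mathcomp Require Import all_boot all_order all_algebra ring.
From Stdlib Require Import FunctionalExtensionality.
Set Implicit Arguments. Unset Strict Implicit. Unset Printing Implicit Defensive.
Import Order.TTheory GRing.Theory Num.Theory.
Local Open Scope ring_scope.

Section Gen.
Variable R : realFieldType.

Lemma sum_ind (T : finType) (a : T) (F : T -> R) : \sum_x (a == x)%:R * F x = F a.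
Proof.
rewrite (bigD1 a) //= eqxx mul1r big1 ?addr0 // => x /negbTE.
by rewrite eq_sym => ->; rewrite mul0r.
Qed.

Lemma dTV_ge0 (T : finType) (p q : T -> R) : 0 <= dTV p q.
Proof. by rewrite /dTV mulr_ge0 ?invr_ge0 ?ler0n // sumr_ge0. Qed.

Lemma dTV_tri (T : finType) (p q r : T -> R) : dTV p r <= dTV p q + dTV q r.
Proof.
rewrite /dTV -mulrDr ler_wpM2l ?invr_ge0 ?ler0n // -big_split /=.
by apply: ler_sum => x _; apply: ler_distD.
Qed.

Lemma dTV_mix (I T : finType) (w : I -> R) (f g : I -> T -> R) :
  (forall i, 0 <= w i) ->
  dTV (fun y => \sum_i w i * f i y) (fun y => \sum_i w i * g i y)
  <= \sum_i w i * dTV (f i) (g i).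
Proof.
move=> w0; rewrite /dTV.
under [X in _ <= X]eq_bigr => i _ do rewrite mulrCA.
rewrite -mulr_sumr ler_wpM2l ?invr_ge0 ?ler0n //.
under [X in _ <= X]eq_bigr => i _ do rewrite mulr_sumr.
rewrite exchange_big /=; apply: ler_sum => y _.
rewrite -sumrB; apply: le_trans (ler_norm_sum _ _ _) _; apply: ler_sum => i _.
by rewrite -mulrBr normrM ger0_norm.
Qed.

Definition subst (T U : finType) (K : T -> U -> R) :=
  (forall x y, 0 <= K x y) /\ (forall x, \sum_y K x y <= 1).

Lemma dTV_push (T U : finType) (p q : T -> R) (K : T -> U -> R) :
  subst K -> dTV (push p K) (push q K) <= dTV p q.
Proof.
case=> K0 K1; rewrite /dTV /push ler_wpM2l ?invr_ge0 ?ler0n //.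
apply: (@le_trans _ _ (\sum_y \sum_x `|p x - q x| * K x y)).
  apply: ler_sum => y _; rewrite -sumrB; apply: le_trans (ler_norm_sum _ _ _) _.
  by apply: ler_sum => x _; rewrite -mulrBl normrM (ger0_norm (K0 _ _)).
rewrite exchange_big /=; apply: ler_sum => x _; rewrite -mulr_sumr.
by rewrite ler_piMr.
Qed.

Lemma push_assoc (T U W : finType) (p : T -> R) (K : T -> U -> R) (L : U -> W -> R) :
  push (push p K) L = push p (fun x => push (K x) L).
Proof.
apply: functional_extensionality => z; rewrite /push.
under eq_bigr => y _ do rewrite mulr_suml.
rewrite exchange_big; apply: eq_bigr => x _; rewrite mulr_sumr.
by apply: eq_bigr => y _; rewrite mulrA.
Qed.

Lemma iter_push (T U : finType) (K : U -> U -> R) (L : T -> U -> R) p t :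
  iter t (fun q => push q K) (push p L)
  = push p (fun x => iter t (fun q => push q K) (L x)).
Proof. by elim: t => //= t ->; rewrite push_assoc. Qed.

Lemma push_dirac (T U : finType) (a : T) (K : T -> U -> R) : push (dirac R a) K = K a.
Proof. by apply: functional_extensionality => y; rewrite /push /dirac sum_ind. Qed.

Lemma kpow_mono (T : finType) (K : T -> T -> R) nu X t s :
  subst K -> push nu K = nu -> (t <= s)%N ->
  dTV (kpow K s X) nu <= dTV (kpow K t X) nu.
Proof.
move=> sK st; elim: s => [|s IH]; first by rewrite leqn0 => /eqP ->.
rewrite leq_eqVlt => /orP [/eqP->//| lts]; apply: le_trans (IH lts).
have := dTV_push (kpow K s X) nu sK; rewrite st.
by rewrite /kpow iterS.
Qed.

Lemma mix_at (T : finType) (K : T -> T -> R) nu Tm eps X :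
  mix_le K nu Tm eps -> subst K -> push nu K = nu -> 0 < nu X ->
  dTV (kpow K Tm X) nu <= eps.
Proof.
move=> mx sK st /mx [t [tle H]]; exact: le_trans (kpow_mono X sK st tle) H.
Qed.

End Gen.
Section GDs.
Variables (R : realFieldType) (V : finType).
Implicit Types (nu : conf V -> R) (s X Y : conf V).

Lemma setvE s v b w : setv s v b w = if w == v then b else s w.
Proof. by rewrite /setv ffunE. Qed.

Lemma setvK s v b c : setv (setv s v b) v c = setv s v c.
Proof. by apply/ffunP => w; rewrite !setvE; case: eqP. Qed.

Lemma setv_id s v : setv s v (s v) = s.
Proof. by apply/ffunP => w; rewrite setvE; case: eqP => // ->. Qed.

Lemma setv_at s v b : setv s v b v = b.
Proof. by rewrite setvE eqxx. Qed.

Lemma condv_ge0 nu s v b : (forall t, 0 <= nu t) -> 0 <= condv nu s v b.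
Proof. by move=> h; rewrite /condv divr_ge0 ?addr_ge0. Qed.

Lemma sum_condv nu s v : (forall t, 0 <= nu t) -> \sum_b condv nu s v b <= 1.
Proof.
move=> h; rewrite big_bool /condv /= -mulrDl addrC.
have [->|nz] := eqVneq (nu (setv s v false) + nu (setv s v true)) 0.
  by rewrite mul0r ler01.
by rewrite mulfV.
Qed.

Lemma sum_ind_r (T : finType) (a : T) (c : R) : \sum_(x : T) c * (x == a)%:R = c.
Proof. by rewrite -[RHS](sum_ind a (fun _ => c)); apply: eq_bigr => x _; rewrite mulrC eq_sym. Qed.

Lemma GD_subst nu : (forall t, 0 <= nu t) -> subst (GD nu).
Proof.
move=> h; split.
  move=> X Y; rewrite /GD mulr_ge0 ?invr_ge0 ?ler0n // sumr_ge0 // => v _.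
  by rewrite sumr_ge0 // => b _; rewrite mulr_ge0 ?ler0n ?condv_ge0.
move=> X; rewrite /GD -mulr_sumr exchange_big /=.
under eq_bigr => v _ do rewrite exchange_big /=.
under eq_bigr => v _ do under eq_bigr => b _ do rewrite sum_ind_r.
have [->|n0] := eqVneq (#|V|%:R : R) 0; first by rewrite invr0 mul0r ler01.
rewrite -[X in _ <= X](mulVf n0) ler_wpM2l ?invr_ge0 ?ler0n //.
apply: le_trans (_ : \sum_(v : V) 1 <= _).
  by apply: ler_sum => v _; apply: sum_condv.
by rewrite sumr_const.
Qed.

Lemma ind_setv X Y v b :
  (Y == setv X v b)%:R = (b == Y v)%:R * \sum_c (setv Y v c == X)%:R :> R.
Proof.
case: (eqVneq Y (setv X v b)) => [->|ne].
  have e c : (setv X v c == X) = (c == X v).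
    by apply/eqP/eqP => [<-|->]; [rewrite setv_at | exact: setv_id].
  rewrite setv_at eqxx mul1r big_bool /= !setvK !e.
  by case: (X v); rewrite /= ?addr0 ?add0r.
case: (eqVneq b (Y v)) => [eb|]; last by rewrite mul0r.
rewrite big1 ?mulr0 // => c _; case: eqP => // ex; exfalso.
by move: ne; rewrite -ex setvK eb setv_id eqxx.
Qed.

Lemma sum_setv (F : conf V -> R) v b Y :
  \sum_X F X * (Y == setv X v b)%:R = (b == Y v)%:R * \sum_c F (setv Y v c).
Proof.
under eq_bigr => X _ do rewrite ind_setv mulrCA mulr_sumr.
rewrite -mulr_sumr exchange_big /=; congr (_ * _); apply: eq_bigr => c _.
by under eq_bigr => X _ do rewrite mulrC; rewrite sum_ind.
Qed.

Lemma condv_setv nu s v c b : condv nu (setv s v c) v b = condv nu s v b.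
Proof. by rewrite /condv !setvK. Qed.

Lemma GD_stat_v nu v Y : (forall t, 0 <= nu t) ->
  \sum_X nu X * (\sum_b condv nu X v b * (Y == setv X v b)%:R) = nu Y.
Proof.
  move=> h.
  under eq_bigr => X _ do rewrite mulr_sumr.
  rewrite exchange_big /=.
  under eq_bigr => b _ do (under eq_bigr => X _ do rewrite mulrA; rewrite sum_setv).
  under eq_bigr => b _ do rewrite eq_sym.
  rewrite sum_ind.
  under eq_bigr => c _ do rewrite condv_setv.
  rewrite -mulr_suml /condv setv_id big_bool /= addrC.
  have [z|nz] := eqVneq (nu (setv Y v false) + nu (setv Y v true)) 0.
    have : nu Y <= nu (setv Y v false) + nu (setv Y v true).
      by have := setv_id Y v; case: (Y v) => e; rewrite -{1}e ?lerDl ?lerDr ?h.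
    by rewrite z => yle; rewrite mul0r; apply/esym/eqP; rewrite eq_le yle h.
  by rewrite mulrC divfK.
Qed.

Lemma GD_stat nu : (0 < #|V|)%N -> (forall t, 0 <= nu t) -> push nu (GD nu) = nu.
Proof.
move=> n0 h; apply: functional_extensionality => Y; rewrite /push /GD.
under eq_bigr => X _ do rewrite mulrCA.
rewrite -mulr_sumr.
under eq_bigr => X _ do rewrite mulr_sumr.
rewrite exchange_big /=.
under eq_bigr => v _ do rewrite GD_stat_v //.
rewrite sumr_const -[nu Y *+ _]mulr_natl mulrA mulVf ?mul1r //.
by rewrite pnatr_eq0 -lt0n.
Qed.

Lemma GD_zero nu X Y : nu Y = 0 -> GD nu X Y = 0.
Proof.
move=> z; rewrite /GD big1 ?mulr0 // => v _; rewrite big1 // => b _.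
case: eqP => [e|]; last by rewrite mulr0.
by rewrite /condv -e z !mul0r.
Qed.

Lemma kpow_zero nu t X Y : nu X != 0 -> nu Y = 0 -> kpow (GD nu) t X Y = 0.
Proof.
move=> nX nY; case: t => [|t].
  by rewrite /kpow /= /dirac; case: eqP => // e; move: nX; rewrite e nY eqxx.
by rewrite /kpow iterS /push /= big1 // => x _; rewrite GD_zero ?mulr0.
Qed.
End GDs.

Section Cond.
Variables (R : realFieldType) (V : finType).
Implicit Types (nu : conf V -> R) (L : {set V}).

Lemma marg_ge nu L Y : (forall t, 0 <= nu t) -> ones_on L Y -> nu Y <= marg1 nu L.
Proof.
by move=> h oY; rewrite /marg1 (bigD1 Y) //= lerDl sumr_ge0.
Qed.

Lemma marg_ge0 nu L : (forall t, 0 <= nu t) -> 0 <= marg1 nu L.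
Proof. by move=> h; rewrite /marg1 sumr_ge0. Qed.

Lemma cond1_ge0 nu L Y : (forall t, 0 <= nu t) -> 0 <= cond1 nu L Y.
Proof. by move=> h; rewrite /cond1; case: ifP => // _; rewrite divr_ge0 ?marg_ge0. Qed.

Lemma sum_cond1 nu L : (forall t, 0 <= nu t) -> \sum_Y cond1 nu L Y <= 1.
Proof.
move=> h; rewrite /cond1 -big_mkcond /= -mulr_suml.
have [->|nz] := eqVneq (marg1 nu L) 0; first by rewrite invr0 mulr0 ler01.
by rewrite mulfV.
Qed.

Lemma cond_marg nu L Y : (forall t, 0 <= nu t) ->
  cond1 nu L Y * marg1 nu L = (ones_on L Y)%:R * nu Y.
Proof.
move=> h; rewrite /cond1; case: ifP => oY; last by rewrite !mul0r.
rewrite mul1r; have [z|nz] := eqVneq (marg1 nu L) 0; last by rewrite divfK.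
have := marg_ge h oY; rewrite z => le; rewrite mulr0.
by apply/esym/eqP; rewrite eq_le le h.
Qed.

End Cond.

Section FDs.
Variables (R : realFieldType) (V : finType) (theta : R) (mu : conf V -> R).
Hypotheses (mu0 : forall t, 0 <= mu t) (mu1 : 0 < mu [ffun => true])
  (th0 : 0 < theta) (th1 : theta < 1).

Definition Zt := \sum_(t : conf V) mu t * theta ^+ nones t.

Lemma Zt_gt0 : 0 < Zt.
Proof.
rewrite /Zt (bigD1 [ffun => true]) //= ltr_wpDr ?sumr_ge0 // => [t _|].
  by rewrite mulr_ge0 // exprn_ge0 // ltW.
by rewrite mulr_gt0 // exprn_gt0.
Qed.

Lemma Zt_neq0 : Zt != 0. Proof. by rewrite gt_eqF // Zt_gt0. Qed.

Lemma tiltE s : tilt theta mu s = mu s * theta ^+ nones s / Zt.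
Proof. by []. Qed.

Lemma tilt_ge0 s : 0 <= tilt theta mu s.
Proof. by rewrite tiltE divr_ge0 ?mulr_ge0 ?exprn_ge0 // ltW // Zt_gt0. Qed.

Lemma tilt_eq0 s : (tilt theta mu s == 0) = (mu s == 0).
Proof.
by rewrite tiltE !mulf_eq0 invr_eq0 (negbTE Zt_neq0) expf_eq0 (gt_eqF th0) andbF !orbF.
Qed.

Definition Pr (S : {set V}) (X : conf V) : R :=
  \prod_(v : V) (if X v then (if v \in S then theta else 1 - theta)
                 else (if v \in S then 1 else 0)).

Lemma FDE X Y : FD theta mu X Y = \sum_S Pr S X * cond1 (tilt theta mu) (~: S) Y.
Proof. by []. Qed.

Lemma Pr_ge0 S X : 0 <= Pr S X.
Proof.
rewrite /Pr prodr_ge0 // => v _.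
by case: (X v); case: (v \in S); rewrite ?ler01 ?lexx ?subr_ge0 ?ltW.
Qed.

Lemma Pr_sum X : \sum_S Pr S X = 1.
Proof.
have e : \prod_(v : V) ((if X v then theta else 1) + (if X v then 1 - theta else 0)) = 1.
  by rewrite big1 // => v _; case: (X v); rewrite ?addr0 // addrC subrK.
rewrite -e bigA_distr; apply: eq_bigr => S _; apply: eq_bigr => v _.
by case: (X v); case: (v \in S).
Qed.

Lemma Pr_ones S X : Pr S X != 0 -> ones_on (~: S) X.
Proof.
move=> h; apply/forallP => v; apply/implyP; rewrite in_setC => vS.
move: h; apply: contraNT => Xv; apply/prodf_eq0; exists v => //.
by rewrite (negbTE Xv) (negbTE vS).
Qed.

Lemma K1 S X : Pr S X * theta ^+ #|~: S|
  = (ones_on (~: S) X)%:R * theta ^+ nones X * (1 - theta) ^+ #|~: S|.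
Proof.
have e1 (c : R) : c ^+ #|~: S| = \prod_(v : V) (if v \in S then 1 else c).
  by rewrite -prodr_const big_mkcond; apply: eq_bigr => v _; rewrite in_setC; case: (v \in S).
have e2 : theta ^+ nones X = \prod_(v : V) (if X v then theta else 1).
  by rewrite /nones -prodr_const big_mkcond /=; apply: eq_bigr => v _; rewrite ?inE.
have e4 : (ones_on (~: S) X)%:R = \prod_(v : V) (if v \in S then 1 else (X v)%:R) :> R.
  case: (boolP (ones_on (~: S) X)) => h.
    rewrite big1 // => v _; case: (boolP (v \in S)) => // vS.
    by move/forallP: h => /(_ v); rewrite in_setC vS /= => ->.
  move/forallPn: h => [v]; rewrite negb_imply in_setC => /andP [vS Xv].
  by apply/esym/eqP/prodf_eq0; exists v => //; rewrite (negbTE vS) (negbTE Xv).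
rewrite !e1 e2 e4 /Pr -!big_split /=; apply: eq_bigr => v _.
by case: (X v); case: (v \in S); rewrite /= ?mulr1 ?mul1r ?mul0r // mulrC.
Qed.

Lemma Zm S : Zt * marg1 (tilt theta mu) (~: S)
  = \sum_X (ones_on (~: S) X)%:R * (mu X * theta ^+ nones X).
Proof.
rewrite /marg1 /tilt -mulr_suml mulrC divfK ?Zt_neq0 // big_mkcond /=.
by apply: eq_bigr => X _; case: ifP; rewrite ?mul1r ?mul0r.
Qed.

Lemma L1 S : (\sum_X mu X * Pr S X) * theta ^+ #|~: S|
  = (1 - theta) ^+ #|~: S| * (Zt * marg1 (tilt theta mu) (~: S)).
Proof.
rewrite Zm mulr_suml mulr_sumr; apply: eq_bigr => X _.
rewrite -mulrA K1; ring.
Qed.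

Lemma FD_subst : subst (FD theta mu).
Proof.
split=> [X Y|X].
  by rewrite FDE sumr_ge0 // => S _; rewrite mulr_ge0 ?Pr_ge0 // cond1_ge0 // => t; apply: tilt_ge0.
under eq_bigr => Y _ do rewrite FDE.
rewrite exchange_big /= -(Pr_sum X); apply: ler_sum => S _.
by rewrite -mulr_sumr ler_piMr ?Pr_ge0 // sum_cond1 // => t; apply: tilt_ge0.
Qed.

Lemma FD_term S Y :
  \sum_X mu X * (Pr S X * cond1 (tilt theta mu) (~: S) Y) = mu Y * Pr S Y.
Proof.
have thn : theta ^+ #|~: S| != 0 by rewrite expf_eq0 (gt_eqF th0) andbF.
apply: (mulIf thn).
set c := cond1 _ _ _.
rewrite (eq_bigr (fun X => c * (mu X * Pr S X))); last by move=> X _; ring.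
rewrite -mulr_sumr -mulrA L1; set m := marg1 _ _.
have -> : c * ((1 - theta) ^+ #|~: S| * (Zt * m)) = (c * m) * ((1 - theta) ^+ #|~: S| * Zt) by ring.
rewrite /c /m cond_marg; last by move=> t; apply: tilt_ge0.
rewrite -[RHS]mulrA K1 tiltE.
have zn := Zt_neq0; move: (Zt) zn => z zn.
by field.
Qed.

Lemma FD_stat : push mu (FD theta mu) = mu.
Proof.
apply: functional_extensionality => Y; rewrite /push.
under eq_bigr => X _ do rewrite FDE mulr_sumr.
rewrite exchange_big /=.
under eq_bigr => S _ do rewrite FD_term.
by rewrite -mulr_sumr Pr_sum mulr1.
Qed.

End FDs.

Section Alg.
Variables (R : realFieldType) (V : finType) (theta : R) (mu : conf V -> R).
Hypotheses (mu0 : forall t, 0 <= mu t) (mu1 : 0 < mu [ffun => true])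
  (th0 : 0 < theta) (th1 : theta < 1) (n0 : (0 < #|V|)%N).

Implicit Types (S : {set V}) (s : conf V) (x : xconf V).
Local Notation tl := (tilt theta mu).
Local Notation nuS S := (cond1 (tilt theta mu) (~: S)).

Lemma tl_ge0 : forall t, 0 <= tl t.
Proof. by move=> t; apply: tilt_ge0. Qed.

Definition xS (s : conf V) (S : {set V}) : xconf V :=
  [ffun v => if v \in S then Some (s v) else None].

Definition good (S : {set V}) (x : xconf V) : bool :=
  [forall v, (x v == None) == (v \notin S)] && (tl (contr x) != 0).

Lemma contrE (x : xconf V) v : contr x v = if x v is Some b then b else true.
Proof. by rewrite /contr ffunE. Qed.

Lemma contr_xsetv (x : xconf V) v b : contr (xsetv x v b) = setv (contr x) v b.
Proof.
by apply/ffunP => w; rewrite contrE setvE /xsetv ffunE; case: eqP => // _; rewrite contrE.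
Qed.

Lemma good_none S x v : good S x -> (x v == None) = (v \notin S).
Proof. by case/andP => /forallP /(_ v) /eqP. Qed.

Lemma good_ones S x : good S x -> ones_on (~: S) (contr x).
Proof.
move=> g; apply/forallP => v; apply/implyP; rewrite in_setC => vS.
by move: (good_none v g); rewrite vS contrE; case: (x v).
Qed.

Lemma good_tl S x : good S x -> tl (contr x) != 0.
Proof. by case/andP. Qed.

Lemma marg_pos S s : ones_on (~: S) s -> tl s != 0 -> 0 < marg1 tl (~: S).
Proof.
move=> o nz; apply: lt_le_trans (marg_ge tl_ge0 o).
by rewrite lt_def nz tl_ge0.
Qed.

Lemma nuS_E S s : ones_on (~: S) s -> nuS S s = tl s / marg1 tl (~: S).
Proof. by rewrite /cond1 => ->. Qed.

Lemma nuS_pos S s : ones_on (~: S) s -> tl s != 0 -> nuS S s != 0.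
Proof.
move=> o nz; rewrite nuS_E // mulf_neq0 // invr_eq0 gt_eqF //; exact: marg_pos o nz.
Qed.

Lemma condv_nuS S s v b : v \in S -> ones_on (~: S) s -> tl s != 0 ->
  condv (nuS S) s v b = condv tl s v b.
Proof.
move=> vS o nz.
have oc c : ones_on (~: S) (setv s v c).
  apply/forallP => w; apply/implyP => wS; rewrite setvE.
  case: eqP => [e|_]; first by move: wS; rewrite e in_setC vS.
  by move/forallP: o => /(_ w); rewrite wS.
have mn : marg1 tl (~: S) != 0 by rewrite gt_eqF // (marg_pos o nz).
rewrite /condv !nuS_E // -mulrDl invf_div mulrA divfK //.
Qed.

Lemma sum_ind_l (T : finType) (a : T) (F : T -> R) : \sum_x F x * (x == a)%:R = F a.
Proof.
by rewrite -[RHS](sum_ind a F); apply: eq_bigr => x _; rewrite mulrC eq_sym.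
Qed.

Lemma step_push S x : good S x ->
  push (algstep theta mu x) (@contrK R V) = GD (nuS S) (contr x).
Proof.
move=> g; apply: functional_extensionality => t; rewrite /push /algstep /GD /contrK.
under eq_bigr => Y _ do rewrite -mulrA mulr_suml.
rewrite -mulr_sumr; congr (_ * _); rewrite exchange_big /=; apply: eq_bigr => v _.
have hv := good_none v g.
have o := good_ones g; have nz := good_tl g.
case xv: (x v) => [c|].
  have vS : v \in S by move: hv; rewrite xv /= => /esym/negbFE.
  under eq_bigr => Y _ do rewrite mulr_suml.
  rewrite exchange_big /=; apply: eq_bigr => b _.
  under eq_bigr => Y _ do rewrite mulrAC.
  rewrite sum_ind_l contr_xsetv eq_sym condv_nuS //.
have vS : v \notin S by rewrite -hv xv.
under eq_bigr => Y _ do rewrite mulrC.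
rewrite sum_ind_l big_bool /=.
have sv : contr x v = true by rewrite contrE xv.
have z : nuS S (setv (contr x) v false) = 0.
  rewrite /cond1; case: ifP => // /forallP /(_ v); rewrite in_setC vS setv_at //.
have st : setv (contr x) v true = contr x by rewrite -{1}sv setv_id.
have c0 : condv (nuS S) (contr x) v false = 0 by rewrite /condv z mul0r.
have c1 : condv (nuS S) (contr x) v true = 1.
  by rewrite /condv z add0r st mulfV // nuS_pos.
by rewrite c0 c1 st mul0r addr0 mul1r eq_sym.
Qed.


Lemma step_zero S x Y : good S x -> ~~ good S Y -> algstep theta mu x Y = 0.
Proof.
move=> g nY; rewrite /algstep big1 ?mulr0 // => v _.
have hv := good_none v g.
case xv: (x v) => [c|]; last first.
  by case: eqP => // e; move: nY; rewrite e g.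
have vS : v \in S by move: hv; rewrite xv /= => /esym/negbFE.
rewrite big1 // => b _; case: eqP => [e|]; last by rewrite mulr0.
have : tl (setv (contr x) v b) == 0.
  move: nY; rewrite e /good contr_xsetv negb_and negbK => /orP [/forallPn [w]|//].
  rewrite /xsetv ffunE; case: (eqVneq w v) => [->|wv]; first by rewrite vS.
  by rewrite (good_none w g) eqxx.
by move/eqP => z; rewrite /condv z !mul0r.
Qed.

Definition supp_good S (p : xconf V -> R) := forall y, ~~ good S y -> p y = 0.

Lemma P1 S p : supp_good S p -> supp_good S (push p (algstep theta mu)).
Proof.
move=> hp Y nY; rewrite /push big1 // => x _.
case: (boolP (good S x)) => gx; first by rewrite (step_zero gx nY) mulr0.
by rewrite hp // mul0r.
Qed.

Lemma push_ext (T U : finType) (p : T -> R) (K1 K2 : T -> U -> R) :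
  (forall a, p a != 0 -> K1 a = K2 a) -> push p K1 = push p K2.
Proof.
move=> h; apply: functional_extensionality => y; rewrite /push; apply: eq_bigr => a _.
by case: (eqVneq (p a) 0) => [->|/h ->]; rewrite ?mul0r.
Qed.

Lemma contrK_push (U : finType) x (K : conf V -> U -> R) :
  push (@contrK R V x) K = K (contr x).
Proof. exact: (push_dirac (contr x) K). Qed.

Lemma P2 S p : supp_good S p ->
  push (push p (algstep theta mu)) (@contrK R V) = push (push p (@contrK R V)) (GD (nuS S)).
Proof.
move=> hp; rewrite !push_assoc; apply: push_ext => x px.
have gx : good S x by apply: contraTT px => /hp ->; rewrite eqxx.
by rewrite (step_push gx) contrK_push.
Qed.

Lemma inner_iter S x t : good S x ->
  supp_good S (iter t (fun q => push q (algstep theta mu)) (dirac R x)) /\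
  push (iter t (fun q => push q (algstep theta mu)) (dirac R x)) (@contrK R V)
  = kpow (GD (nuS S)) t (contr x).
Proof.
move=> g; elim: t => [|t [hs he]].
  split; last by rewrite /= push_dirac.
  by move=> y ny; rewrite /dirac /=; case: eqP => // e; move: ny; rewrite -e g.
split; first by rewrite iterS; apply: P1.
by rewrite iterS (P2 hs) he /kpow iterS.
Qed.

Lemma lift_xS s S : Defs.lift theta s (xS s S) = Pr theta S s.
Proof.
rewrite /Defs.lift /Pr; apply: eq_bigr => v _; rewrite ffunE.
by case: (s v); case: (v \in S).
Qed.

Lemma lift0 s x : x != xS s [set v | x v != None] -> Defs.lift theta s x = 0.
Proof.
move=> nx.
have [v hv] : exists v, x v != xS s [set v | x v != None] v.
  case/boolP: [exists v, x v != xS s [set v | x v != None] v] => [/existsP //|/existsPn h].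
  by exfalso; move/eqP: nx; apply; apply/ffunP => v; apply/eqP; exact: negbNE (h v).
rewrite /Defs.lift; apply/eqP/prodf_eq0; exists v => //.
move: hv; rewrite ffunE in_set.
case: (x v) => [b|] /=; last by [].
by case: (s v); case: b; rewrite ?eqxx.
Qed.

Lemma Dlift s (g : xconf V -> R) :
  \sum_x Defs.lift theta s x * g x = \sum_S Pr theta S s * g (xS s S).
Proof.
transitivity (\sum_x \sum_S (xS s S == x)%:R * (Defs.lift theta s x * g x)).
  apply: eq_bigr => x _; rewrite -mulr_suml.
  set Sx := [set v | x v != None].
  case: (eqVneq x (xS s Sx)) => [ex|nx]; last by rewrite lift0 // !mul0r mulr0.
  rewrite (bigD1 Sx) //= -ex eqxx big1 ?addr0 ?mul1r // => S nS.
  case: eqP => // e; exfalso; move/negP: nS; apply; apply/eqP/setP => v.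
  have := congr1 (fun f : xconf V => f v) (etrans e ex); rewrite /= !ffunE.
  by case: (v \in S); case: (v \in Sx).
by rewrite exchange_big /=; apply: eq_bigr => S _; rewrite sum_ind lift_xS.
Qed.

Lemma contr_xS s S : ones_on (~: S) s -> contr (xS s S) = s.
Proof.
move=> o; apply/ffunP => v; rewrite contrE ffunE.
case: (boolP (v \in S)) => // vS.
by move/forallP: o => /(_ v); rewrite in_setC vS /= => ->.
Qed.

Lemma good_xS s S : ones_on (~: S) s -> tl s != 0 -> good S (xS s S).
Proof.
move=> o nz; rewrite /good contr_xS // nz andbT; apply/forallP => v.
by rewrite ffunE; case: (v \in S).
Qed.

Definition Around (T2 : nat) (s : conf V) : conf V -> R :=
  push (iter T2 (fun q => push q (algstep theta mu)) (Defs.lift theta s)) (@contrK R V).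

Lemma push_id (T : finType) (p : T -> R) : push p (fun a => dirac R a) = p.
Proof.
apply: functional_extensionality => y; rewrite /push /dirac.
by rewrite sum_ind_l.
Qed.

Lemma Around_E T2 s : tl s != 0 ->
  Around T2 s = fun t => \sum_S Pr theta S s * kpow (GD (nuS S)) T2 s t.
Proof.
move=> nz; rewrite /Around -{1}(push_id (Defs.lift theta s)) iter_push push_assoc.
apply: functional_extensionality => t.
rewrite {1}/push.
rewrite (Dlift s (fun x => push (iter T2 (fun q => push q (algstep theta mu)) (dirac R x))
                        (@contrK R V) t)).
apply: eq_bigr => S _.
case: (eqVneq (Pr theta S s) 0) => [->|pn]; first by rewrite !mul0r.
have o := Pr_ones pn.
have [_ ->] := inner_iter T2 (good_xS o nz).
by rewrite contr_xS.
Qed.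


Lemma Pr_ge0' S s : 0 <= Pr theta S s.
Proof. by apply: Pr_ge0. Qed.

Lemma Around_bound T2 e s : tilted_mix_le mu theta T2 e -> mu s != 0 ->
  dTV (Around T2 s) (FD theta mu s) <= e.
Proof.
move=> hmix ms; have nz : tl s != 0 by rewrite tilt_eq0.
rewrite Around_E //.
have -> : FD theta mu s = fun t => \sum_S Pr theta S s * nuS S t.
  by apply: functional_extensionality => t; rewrite FDE.
apply: le_trans (@dTV_mix R _ _ (fun S => Pr theta S s) (fun S => kpow (GD (nuS S)) T2 s)
   (fun S => nuS S) (fun S => Pr_ge0' S s)) _.
rewrite -[X in _ <= X]mul1r -(Pr_sum theta s) mulr_suml; apply: ler_sum => S _.
case: (eqVneq (Pr theta S s) 0) => [->|pn]; first by rewrite !mul0r.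
rewrite ler_wpM2l ?Pr_ge0' //.
have o := Pr_ones pn.
have mpos : 0 < marg1 mu (~: S).
  by apply: lt_le_trans (marg_ge mu0 o); rewrite lt_def ms mu0.
have mx := hmix _ mpos; rewrite /GD_mix_le in mx.
have nge : forall t, 0 <= nuS S t by move=> t; apply: cond1_ge0 tl_ge0.
apply: (mix_at mx); first exact: GD_subst.
  exact: GD_stat.
by rewrite lt_def nge andbT nuS_pos.
Qed.

Lemma Around_supp T2 s t : mu s != 0 -> mu t = 0 -> Around T2 s t = 0.
Proof.
move=> ms mt; have nz : tl s != 0 by rewrite tilt_eq0.
rewrite Around_E // big1 // => S _.
case: (eqVneq (Pr theta S s) 0) => [->|pn]; first by rewrite mul0r.
have o := Pr_ones pn.
rewrite kpow_zero ?mulr0 ?nuS_pos //.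
rewrite /cond1; case: ifP => // _.
have /eqP -> : tl t == 0 by rewrite tilt_eq0 //; apply/eqP.
by rewrite mul0r.
Qed.

Definition cst (T2 i : nat) : conf V -> R :=
  push (alg_state theta mu i T2) (@contrK R V).

Lemma c_succ T2 i : cst T2 i.+1 = push (cst T2 i) (Around T2).
Proof.
by rewrite /cst /alg_state iterS /alg_round iter_push push_assoc.
Qed.

Lemma ones_all S : ones_on (~: S) ([ffun => true] : conf V).
Proof. by apply/forallP => v; rewrite ffunE implybT. Qed.

Lemma c0 T2 : cst T2 0 = dirac R [ffun => true].
Proof.
rewrite /cst /alg_state /= push_assoc push_dirac.
apply: functional_extensionality => t.
rewrite /push (Dlift _ (fun x => @contrK R V x t)) /contrK.
under eq_bigr => S _ do rewrite contr_xS ?ones_all //.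
by rewrite -mulr_suml Pr_sum mul1r.
Qed.

Definition mass (T : finType) (p : T -> R) := (forall a, 0 <= p a) /\ \sum_a p a <= 1.

Lemma push_mass (T U : finType) (p : T -> R) (K : T -> U -> R) :
  mass p -> subst K -> mass (push p K).
Proof.
move=> [p0 p1] [K0 K1]; split=> [y|].
  by rewrite /push sumr_ge0 // => a _; rewrite mulr_ge0.
rewrite /push exchange_big /=; apply: le_trans p1; apply: ler_sum => a _.
by rewrite -mulr_sumr ler_piMr.
Qed.

Lemma iter_mass (T : finType) (K : T -> T -> R) p t :
  mass p -> subst K -> mass (iter t (fun q => push q K) p).
Proof. by move=> m sK; elim: t => //= t IH; apply: push_mass. Qed.

Lemma dirac_mass (T : finType) (a : T) : mass (dirac R a).
Proof.
split=> [y|]; first by rewrite /dirac ler0n.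
by rewrite /dirac (eq_bigr (fun y => (a == y)%:R * 1)) ?sum_ind // => y _; rewrite mulr1.
Qed.

Lemma lift_subst : subst (Defs.lift theta : conf V -> xconf V -> R).
Proof.
split=> [s x|s].
  rewrite /Defs.lift prodr_ge0 // => v _.
  by case: (s v); case: (x v) => [[]|]; rewrite ?ler01 ?lexx ?subr_ge0 ?ltW.
have := Dlift s (fun _ => 1); under eq_bigr => x _ do rewrite mulr1.
by move=> ->; under eq_bigr => S _ do rewrite mulr1; rewrite Pr_sum.
Qed.

Lemma contrK_subst : subst (@contrK R V).
Proof.
split=> [x y|x]; first by rewrite /contrK ler0n.
by rewrite /contrK (eq_bigr (fun y => (contr x == y)%:R * 1)) ?sum_ind // => y _; rewrite mulr1.
Qed.

Lemma step_subst : subst (algstep theta mu).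
Proof.
split=> [x Y|x].
  rewrite /algstep mulr_ge0 ?invr_ge0 ?ler0n // sumr_ge0 // => v _.
  case: (x v) => [c|]; last by rewrite ler0n.
  by rewrite sumr_ge0 // => b _; rewrite mulr_ge0 ?ler0n ?condv_ge0 // => t; apply: tilt_ge0.
rewrite /algstep -mulr_sumr exchange_big /=.
have nn : (#|V|%:R : R) != 0 by rewrite pnatr_eq0 -lt0n.
rewrite -[X in _ <= X](mulVf nn) ler_wpM2l ?invr_ge0 ?ler0n //.
apply: le_trans (_ : \sum_(v : V) 1 <= _); last by rewrite sumr_const.
apply: ler_sum => v _; case: (x v) => [c|].
  rewrite exchange_big /=.
  under eq_bigr => b _ do rewrite sum_ind_r.
  by apply: sum_condv => t; apply: tilt_ge0.
by rewrite (eq_bigr (fun Y => 1 * (Y == x)%:R)) ?sum_ind_r // => Y _; rewrite mul1r.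
Qed.

Lemma state_mass T2 i : mass (alg_state theta mu i T2).
Proof.
elim: i => [|i IH].
  by apply: push_mass (dirac_mass _) lift_subst.
rewrite /alg_state iterS -/(alg_state theta mu i T2) /alg_round.
apply: iter_mass; last exact: step_subst.
by apply: push_mass lift_subst; apply: push_mass contrK_subst.
Qed.

Lemma c_mass T2 i : mass (cst T2 i).
Proof. exact: push_mass (state_mass T2 i) contrK_subst. Qed.

End Alg.

Unset Implicit Arguments.

Theorem lemma3p1 (R : realFieldType) (V : finType) (mu : {ffun V -> bool} -> R)
  (theta eps : R) (T1 T2 : nat) :
  is_distr mu ->
  (0 < #|V|)%N ->
  0 < mu [ffun => true] ->
  0 < theta < 1 ->
  0 < eps < 1 ->
  FD_mix_le mu theta T1 (eps / 2) ->
  tilted_mix_le mu theta T2 (eps / (2 * T1%:R)) ->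
  dTV (alg_out theta mu T1 T2) mu <= eps.
Proof.
move=> [mu0 musum] n0 mu1 /andP[th0 th1] /andP[e0 e1] hFD hT.
set e' := eps / (2 * T1%:R).
have e'0 : 0 <= e' by rewrite divr_ge0 ?mulr_ge0 ?ler0n // ltW.
pose c := cst theta mu T2.
pose k i := kpow (FD theta mu) i [ffun => true].
have key : forall i, (forall t, c i t != 0 -> mu t != 0) /\ dTV (c i) (k i) <= i%:R * e'.
  elim => [|i [sp d]].
    rewrite /c c0 /k /kpow /=; split.
      move=> t; rewrite /dirac; case: (eqVneq [ffun => true] t) => [<- _|ne].
        by rewrite gt_eqF.
      by rewrite eqxx.
    by rewrite /dTV big1 ?mulr0 ?mul0r // => y _; rewrite subrr normr0.
  split.
    move=> t nz; apply/eqP => mt; move: nz; rewrite /c c_succ /push big1 ?eqxx // => s _.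
    case: (eqVneq (cst theta mu T2 i s) 0) => [->|cs]; first by rewrite mul0r.
    by rewrite (Around_supp mu0 mu1 th0) ?mulr0 //; apply: sp.
  have [m0 m1] := c_mass mu0 mu1 th0 th1 n0 T2 i.
  rewrite /c c_succ /k /kpow iterS -/(kpow (FD theta mu) i [ffun => true]) -/(k i).
  apply: (le_trans (dTV_tri (push (c i) (Around theta mu T2)) (push (c i) (FD theta mu)) (push (k i) (FD theta mu)))).
  have -> : i.+1%:R * e' = e' + i%:R * e' by rewrite -addn1 natrD mulrDl mul1r addrC.
  apply: lerD; last first.
    by apply: le_trans (dTV_push _ _ (FD_subst mu0 mu1 th0 th1)) d.
  apply: le_trans (@dTV_mix R _ _ (c i) (Around theta mu T2) (FD theta mu) m0) _.
  apply: le_trans (_ : \sum_s c i s * e' <= _).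
    apply: ler_sum => s _.
    case: (eqVneq (c i s) 0) => [->|cs]; first by rewrite !mul0r.
    by rewrite ler_wpM2l // (Around_bound mu0 mu1 th0 th1 n0) // sp.
  by rewrite -mulr_suml ler_piMl.
have [_ d] := key T1.
rewrite /alg_out -/(cst theta mu T2 T1) -/(c T1).
apply: (le_trans (dTV_tri (c T1) (k T1) mu)).
have f : dTV (k T1) mu <= eps / 2.
  by apply: mix_at hFD (FD_subst mu0 mu1 th0 th1) (FD_stat mu0 mu1 th0) mu1.
rewrite [X in _ <= X](splitr eps); apply: lerD f; apply: le_trans d _.
case: (eqVneq T1 0%N) => [->|T0]; first by rewrite mul0r divr_ge0 // ltW.
have tn : (T1%:R : R) != 0 by rewrite pnatr_eq0.
have -> : T1%:R * e' = eps / 2 by rewrite /e'; field; rewrite tn.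
by [].
Qed.
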